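(* For $n=3$ agents and $3$ items with the unit-range normalization, every ordinal mechanism $J$ (deterministic or randomized) satisfies $ar(J)\le 2/3$.
   Context: Agents $N=\{1,2,3\}$, items $M=\{1,2,3\}$, outcomes are bijections $\mu$ ($O$ the set of outcomes). Unit-range valuation functions: injective $u_i:M\to\mathbb R$ with $\max_j u_i(j)=1$ and $\min_j u_i(j)=0$; $V^3$ the set of profiles. A mechanism maps each profile to a distribution over $O$; it is ordinal if its output distribution is unchanged when any one agent's valuation function is replaced by another inducing the same ordering of the items. $ar(J)=\inf_{\mathbf u\in V^3}\mathbb E[\sum_i u_i(J(\mathbf u)_i)]/\max_{\mu\in O}\sum_i u_i(\mu_i)$. *)

(* Defs.v *)
From mathcomp Require Import all_boot all_fingroup.
From Stdlib Require Import Reals.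
Set Implicit Arguments. Unset Strict Implicit. Unset Printing Implicit Defensive.
Open Scope R_scope.

Definition agent := 'I_3.
Definition item := 'I_3.
(* outcomes: bijections mu : agents -> items (mu i = item of agent i) *)
Definition outcome := {perm 'I_3}.

Definition valuation := item -> R.
Definition profile := agent -> valuation.

Definition unit_range (v : valuation) : Prop :=
  injective v /\ (exists j, v j = 1) /\ (exists j, v j = 0) /\
  (forall j, 0 <= v j <= 1).

Definition valid_profile (u : profile) : Prop := forall i, unit_range (u i).

(* a (randomized) mechanism: profile -> distribution over outcomes *)
Definition mechanism := profile -> outcome -> R.

Definition is_mechanism (J : mechanism) : Prop :=
  forall u, valid_profile u ->
    (forall mu, 0 <= J u mu) /\ \big[Rplus/0]_(mu : outcome) J u mu = 1.

Definition same_ordering (v w : valuation) : Prop :=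
  forall j k, v j < v k <-> w j < w k.

Definition update (u : profile) (i : agent) (v : valuation) : profile :=
  fun k => if k == i then v else u k.

Definition ordinal_mech (J : mechanism) : Prop :=
  forall u i v, valid_profile u -> unit_range v -> same_ordering (u i) v ->
    forall mu, J (update u i v) mu = J u mu.

Definition welfare (u : profile) (mu : outcome) : R :=
  \big[Rplus/0]_(i : agent) u i (mu i).

Definition exp_welfare (J : mechanism) (u : profile) : R :=
  \big[Rplus/0]_(mu : outcome) (J u mu * welfare u mu).

(* welfare is nonnegative, so 0 is a safe seed for the max *)
Definition opt_welfare (u : profile) : R :=
  \big[Rmax/0]_(mu : outcome) welfare u mu.

(* ar(J) <= c, unfolded: the infimum over V^3 of the ratio is <= c *)
Definition ar_le (J : mechanism) (c : R) : Prop :=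
  forall eps, 0 < eps -> exists u, valid_profile u /\
    exp_welfare J u / opt_welfare u < c + eps.

(* Main.v *)
Require Import Defs.
From HB Require Import structures.
From mathcomp Require Import all_boot all_fingroup.
From Stdlib Require Import Reals Lra.
Open Scope R_scope.
HB.instance Definition _ := Monoid.isComLaw.Build R 0 Rplus (fun x y z => esym (Rplus_assoc x y z)) Rplus_comm Rplus_0_l.
Definition o0 : 'I_3 := @Ordinal 3 0 isT.
Definition o1 : 'I_3 := @Ordinal 3 1 isT.
Definition o2 : 'I_3 := @Ordinal 3 2 isT.
Definition fv (d : R) : valuation := fun j =>
  if nat_of_ord j == 0%nat then 1 else if nat_of_ord j == 1%nat then d else 0.
Lemma fv_ur d : 0 < d < 1 -> unit_range (fv d).
Proof.
move=> Hd; split; [|split; [|split]].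
- move=> [[|[|[|m]]] Hm] [[|[|[|m']]] Hm'] //=; rewrite /fv /= => H;
  try (apply: val_inj; reflexivity); lra.
- by exists o0.
- by exists o2.
- move=> [[|[|[|m]]] Hm] //=; rewrite /fv /=; lra.
Qed.
Lemma fv_same d e : 0 < d < 1 -> 0 < e < 1 -> same_ordering (fv d) (fv e).
Proof.
move=> Hd He [[|[|[|m]]] Hm] //= [[|[|[|m']]] Hm'] //=; rewrite /fv /=; lra.
Qed.
Lemma fv_sum d : \big[Rplus/0]_(j : 'I_3) fv d j = 1 + d.
Proof. rewrite !big_ord_recr big_ord0 /fv /=; lra. Qed.
Lemma sumR_scale (a : R) (F : outcome -> R) :
  \big[Rplus/0]_(mu : outcome) (a * F mu) = a * \big[Rplus/0]_(mu : outcome) F mu.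
Proof. apply: (big_rec2 (fun x y => x = a * y)); [lra|] => mu x y _ ->; ring. Qed.
Lemma bigmax_ge (F : outcome -> R) mu0 : F mu0 <= \big[Rmax/0]_(mu : outcome) F mu.
Proof.
have: mu0 \in index_enum outcome by rewrite mem_index_enum.
elim: (index_enum outcome) => // x r IH.
rewrite in_cons big_cons => /orP [/eqP ->|/IH H]; first exact: Rmax_l.
apply: Rle_trans H _; exact: Rmax_r.
Qed.
Definition ind (mu : outcome) (k : agent) : R := if mu k == o1 then 1 else 0.
Lemma ind_sum mu : ind mu o0 + ind mu o1 + ind mu o2 = 1.
Proof.
have E : forall j, (mu j == o1) = (j == (mu^-1)%g o1).
  by move=> j; rewrite -{1}(permKV mu o1) (inj_eq perm_inj).
rewrite /ind !E; case: ((mu^-1)%g o1) => [[|[|[|m]]] Hm] //=; lra.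
Qed.

Theorem mainTheorem13 (J : mechanism) :
  is_mechanism J -> ordinal_mech J -> ar_le J (2 / 3).
Proof.
move=> HJ Hord eps Heps.
set d := Rmin (eps / 2) (1 / 4).
have Hd1 : 0 < d by apply: Rmin_glb_lt; lra.
have Hd2 : d <= eps / 2 by apply: Rmin_l.
have Hd3 : d <= 1 / 4 by apply: Rmin_r.
set u0 : profile := fun _ => fv d.
have Hu0 : valid_profile u0 by move=> k; apply: fv_ur; lra.
set Q := fun k => \big[Rplus/0]_(mu : outcome) (J u0 mu * ind mu k).
have sumQ : Q o0 + Q o1 + Q o2 = 1.
  rewrite /Q -!big_split /=.
  rewrite -(proj2 (HJ u0 Hu0)); apply: eq_bigr => mu _.
  have := ind_sum mu; nra.
have [i Hi] : exists i, Q i <= 1 / 3.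
  case: (Rle_dec (Q o0) (1/3)) => H0; first by exists o0.
  case: (Rle_dec (Q o1) (1/3)) => H1; first by exists o1.
  exists o2; lra.
set u := update u0 i (fv (1 - d)).
have Hur : unit_range (fv (1 - d)) by apply: fv_ur; lra.
have Hu : valid_profile u.
  by move=> k; rewrite /u /update; case: (k == i) => //; apply: Hu0.
have Heq : forall mu, J u mu = J u0 mu.
  move=> mu; apply: Hord => //; apply: fv_same; lra.
have Hw : forall mu : outcome, welfare u mu = (1 + d) + (1 - 2 * d) * ind mu i.
  move=> mu; rewrite /welfare. rewrite (bigD1 i) //=.
  have H : fv d (mu i) + \big[Rplus/0]_(k < 3 | k != i) fv d (mu k) = 1 + d.
    have E : \big[Rplus/0]_(j : 'I_3) fv d j = \big[Rplus/0]_(k : 'I_3) fv d (mu k)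
      := reindex_inj (@perm_inj _ mu).
    by rewrite -(fv_sum d) [RHS]E [RHS](bigD1 i).
  rewrite [X in _ + X = _](eq_bigr (fun k => fv d (mu k))); last first.
    by move=> k Hk; rewrite /u /update (negbTE Hk).
  rewrite /u /update eqxx /ind.
  move: (\big[Rplus/0]_(k < 3 | k != i) fv d (mu k)) H => S.
  case: (mu i) => [[|[|[|m]]] Hm] //=; rewrite /fv /=; lra.
have Hexp : exp_welfare J u = (1 + d) + (1 - 2 * d) * Q i.
  rewrite /exp_welfare.
  have -> : \big[Rplus/0]_(mu : outcome) (J u mu * welfare u mu) =
    \big[Rplus/0]_(mu : outcome) ((1 + d) * J u0 mu + (1 - 2 * d) * (J u0 mu * ind mu i)).
    by apply: eq_bigr => mu _; rewrite Heq Hw; ring.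
  rewrite big_split /= !sumR_scale (proj2 (HJ u0 Hu0)) /Q; ring.
have Hopt : 2 - d <= opt_welfare u.
  have := bigmax_ge (welfare u) (tperm i o1).
  rewrite Hw /ind tpermL eqxx; rewrite /opt_welfare; lra.
exists u; split => //.
have Hpos : 0 < opt_welfare u by lra.
apply: (Rmult_lt_reg_r (opt_welfare u)) => //.
rewrite /Rdiv Rmult_assoc Rinv_l; last lra.
rewrite Rmult_1_r Hexp.
have H2 : (2/3 + eps) * (2 - d) <= (2/3 + eps) * opt_welfare u.
  apply: Rmult_le_compat_l; lra.
have H3 : (1 - 2 * d) * Q i <= (1 - 2 * d) * (1/3).
  apply: Rmult_le_compat_l; lra.
nra.
Qed.
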